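(* Let $\mathsf K$ be a field of characteristic $0$ and let $F(X,Y)=f_n(X)Y^n+\dots+f_0(X)\in\mathsf K[X,Y]$ have $Y$-degree $n$, with $F(0,Y)$ not identically $0$. Suppose $\mathsf L$ is a finite extension of $\mathsf K$, $e_1,\dots,e_n$ are positive integers and $y_i=\sum_{k=\kappa_i}^\infty a_{ik}x^{k/e_i}\in\mathsf L((x^{1/e_i}))$ with $a_{i\kappa_i}\ne0$ ($i=1,\dots,n$) are such that $F(x,Y)=f_n(x)(Y-y_1)\cdots(Y-y_n)$. Let $$r=\min\Bigl\{i+j:\ \frac{\partial^{i+j}F}{\partial X^i\partial Y^j}(0,0)\neq 0\Bigr\}.$$ Then $$r=\sum_{i:\ \kappa_i>0}\min\{1,\kappa_i/e_i\},$$ the sum being over those $i$ with $\kappa_i>0$.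
   Context: $\mathsf L((x^{1/e}))$ denotes the field of formal Laurent series in $x^{1/e}$ with coefficients in $\mathsf L$ (a field containing $\mathsf K((x))$). *)

(* Defs.v *)
From HB Require Import structures.
From mathcomp Require Import all_boot all_order all_algebra all_field.
Set Implicit Arguments. Unset Strict Implicit. Unset Printing Implicit Defensive.
Import Order.TTheory GRing.Theory Num.Theory.
Local Open Scope ring_scope.

(* Formal Laurent series in a variable t over a ring L, represented as
   t^(lv s) * (sum_{m >= 0} lc s m t^m).  Two representations denote the same
   series iff they have the same coefficient function [lcoef]. *)
Record lser (L : nzRingType) := LSer { lv : int; lc : nat -> L }.

Section Laurent.
Variable L : nzRingType.

Definition lcoef (s : lser L) (z : int) : L :=
  if (lv s <= z)%R then lc s `|z - lv s|%N else 0.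

Definition lser_eq (s1 s2 : lser L) : Prop := forall z, lcoef s1 z = lcoef s2 z.

Definition lzero : lser L := LSer 0 (fun _ => 0).
Definition lone : lser L := LSer 0 (fun m => if m == 0%N then 1 else 0).
Definition lopp (s : lser L) : lser L := LSer (lv s) (fun m => - lc s m).
Definition ladd (s1 s2 : lser L) : lser L :=
  let v := Num.min (lv s1) (lv s2) in
  LSer v (fun m => lcoef s1 (v + m%:Z) + lcoef s2 (v + m%:Z)).
Definition lmul (s1 s2 : lser L) : lser L :=
  LSer (lv s1 + lv s2) (fun m => \sum_(i < m.+1) lc s1 i * lc s2 (m - i)).

(* [prodlin ys j] = coefficient of Y^j in prod_{y in ys} (Y - y),
   a polynomial in Y with Laurent-series coefficients. *)
Fixpoint prodlin (ys : seq (lser L)) (j : nat) : lser L :=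
  match ys with
  | [::] => if j == 0%N then lone else lzero
  | y :: ys' =>
      ladd (if j is j'.+1 then prodlin ys' j' else lzero)
           (lopp (lmul y (prodlin ys' j)))
  end.
End Laurent.

Section Embeddings.
Variables (K : fieldType) (L : fieldExtType K).

(* The polynomial p(x) in K[x] viewed in L((t)), t = x^(1/E). *)
Definition poly_lser (E : nat) (p : {poly K}) : lser L :=
  LSer 0 (fun m => if (E %| m)%N then (p`_(m %/ E))%:A else 0).

(* The Puiseux series  sum_{k >= kappa} a k x^(k/e)  in L((t)), t = x^(1/E),
   where e divides E. *)
Definition puiseux_lser (E e : nat) (kappa : int) (a : int -> L) : lser L :=
  let d := (E %/ e)%N in
  LSer (kappa * d%:Z) (fun m => if (d %| m)%N then a (kappa + (m %/ d)%N%:Z) else 0).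
End Embeddings.

(* Bivariate polynomials: F : {poly {poly K}}, outer variable Y, inner X. *)
Definition mixed_deriv_at0 (K : fieldType) (F : {poly {poly K}}) (i j : nat) : K :=
  ((map_poly (derivn i) (derivn j F)).[0]).[0].

Definition is_order_at0 (K : fieldType) (F : {poly {poly K}}) (r : nat) : Prop :=
  (exists i j, (i + j)%N = r /\ mixed_deriv_at0 F i j != 0) /\
  (forall i j, mixed_deriv_at0 F i j != 0 -> (r <= i + j)%N).

(* Main.v *)
Require Import Defs.
From HB Require Import structures.
From mathcomp Require Import all_boot all_order all_algebra all_field.
From mathcomp Require Import zify ring lra.
Import Order.TTheory GRing.Theory Num.Theory.
Local Open Scope ring_scope.

Module Helpers.
Set Implicit Arguments. Unset Strict Implicit. Unset Printing Implicit Defensive.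
Section LS.
Variable L : nzRingType.
Implicit Types s : lser L.

Definition ge s (m : int) := forall z, z < m -> lcoef s z = 0.

Lemma lcoef_lc s (i : nat) : lcoef s (lv s + i%:Z) = lc s i.
Proof.
rewrite /lcoef ler_wpDr // addrAC subrr add0r //.
Qed.

Lemma lcoef_lt s z : z < lv s -> lcoef s z = 0.
Proof. by rewrite /lcoef ltNge => /negbTE ->. Qed.

Lemma lcoef_opp s z : lcoef (lopp s) z = - lcoef s z.
Proof. rewrite /lcoef /=; case: ifP => //; by rewrite oppr0. Qed.

Lemma lcoef_add s1 s2 z : lcoef (ladd s1 s2) z = lcoef s1 z + lcoef s2 z.
Proof.
rewrite {1}/lcoef /=; case: ifP => h.
  rewrite gez0_abs ?subr_ge0 // subrKC //.
move: h; rewrite ge_min => /negbT; rewrite negb_or -!ltNge => /andP[h1 h2]; rewrite !lcoef_lt ?addr0 //.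
Qed.

Lemma lcoef_zero z : lcoef (lzero L) z = 0.
Proof. by rewrite /lcoef; case: ifP. Qed.

Lemma lcoef_one z : lcoef (lone L) z = (z == 0)%:R.
Proof.
rewrite /lcoef /= subr0; case: ifP => h.
  have [->|hz] := eqVneq z 0; first by [].
  by rewrite absz_eq0 (negbTE hz).
have [hz|//] := eqVneq z 0.
by rewrite hz lexx in h.
Qed.

Lemma lcoef_mul s1 s2 z : lv s1 + lv s2 <= z ->
  lcoef (lmul s1 s2) z = \sum_(i < `|(z - (lv s1 + lv s2))%R|%N.+1)
     lcoef s1 (lv s1 + (i : nat)%:Z) * lcoef s2 (z - (lv s1 + (i : nat)%:Z)).
Proof.
move=> hz; rewrite /lcoef /= hz; apply: eq_bigr => i _.
rewrite ler_wpDr // addrAC subrr add0r.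
have hi := ltn_ord i; rewrite ltnS in hi.
have -> : z - (lv s1 + (i : nat)%:Z) = lv s2 + ((`|(z - (lv s1 + lv s2))%R|%N - i)%N)%:Z.
  lia.
by rewrite ler_wpDr // addrAC subrr add0r.
Qed.

Lemma ge_mul s1 s2 o1 o2 : ge s1 o1 -> ge s2 o2 -> ge (lmul s1 s2) (o1 + o2).
Proof.
move=> h1 h2 z hz; have [hle|hlt] := lerP (lv s1 + lv s2) z; last first.
  by rewrite /lcoef /= leNgt hlt.
rewrite lcoef_mul // big1 // => i _.
have [ha|ha] := ltrP (lv s1 + (i : nat)%:Z) o1; first by rewrite h1 // mul0r.
by rewrite h2 ?mulr0 //; lia.
Qed.

Lemma lead_mul s1 s2 o1 o2 : ge s1 o1 -> ge s2 o2 ->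
  lcoef (lmul s1 s2) (o1 + o2) = lcoef s1 o1 * lcoef s2 o2.
Proof.
move=> h1 h2; have [hle|hlt] := lerP (lv s1 + lv s2) (o1 + o2); last first.
  rewrite {1}/lcoef /= leNgt hlt /=.
  have [h|h] := ltrP o1 (lv s1); first by rewrite (@lcoef_lt s1 _ h) mul0r.
  by rewrite (@lcoef_lt s2) ?mulr0 //; lia.
rewrite lcoef_mul //.
rewrite (eq_bigr (fun i : 'I_(_) => if lv s1 + (i : nat)%:Z == o1
     then lcoef s1 o1 * lcoef s2 o2 else 0)); last first.
  move=> i _; have [e|ne] := eqVneq (lv s1 + (i : nat)%:Z) o1.
    by rewrite e addrC addKr.
  have [ha|ha] := ltrP (lv s1 + (i : nat)%:Z) o1; first by rewrite h1 // mul0r.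
  by rewrite h2 ?mulr0 //; lia.
rewrite -big_mkcond /=.
have [h|h] := ltrP o1 (lv s1).
  rewrite big_pred0 ?(@lcoef_lt s1 _ h) ?mul0r // => i; apply/negbTE; lia.
have [h'|h'] := ltrP o2 (lv s2).
  rewrite big_pred0 ?(@lcoef_lt s2 _ h') ?mulr0 // => i; apply/negbTE.
  have := ltn_ord i; lia.
have hi : (`|(o1 - lv s1)%R|%N < `|(o1 + o2 - (lv s1 + lv s2))%R|%N.+1)%N by lia.
rewrite (big_pred1 (Ordinal hi)) // => i; apply/eqP/eqP.
  move=> e; apply: val_inj => /=; move: e; case: i => k /= _; lia.
move=> -> /=; lia.
Qed.
End LS.

Lemma ge_lv (L : nzRingType) (s : lser L) : ge s (lv s).
Proof. by move=> z hz; rewrite lcoef_lt. Qed.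

Lemma prodlin_big (L : nzRingType) (ys : seq (lser L)) j :
  (size ys < j)%N -> forall z, lcoef (prodlin ys j) z = 0.
Proof.
elim: ys j => [|y ys IH] j /=.
  by case: j => // j _ z; rewrite lcoef_zero.
case: j => // j hj z; rewrite lcoef_add lcoef_opp IH //.
rewrite (@ge_mul _ _ _ (lv y) (z - lv y + 1)) ?oppr0 ?addr0 //.
- exact: ge_lv.
- by move=> z' _; rewrite IH // (ltn_trans _ hj).
- lia.
Qed.

Section Val.
Variable L : idomainType.
Variable w : int.

Definition initp (ys : seq (lser L)) (m : int) : {poly L} :=
  \poly_(j < (size ys).+1) lcoef (prodlin ys j) (m - w * j%:Z).

Lemma coef_initp ys m k : (initp ys m)`_k = lcoef (prodlin ys k) (m - w * k%:Z).
Proof.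
rewrite coef_poly; case: ifP => // /negbT; rewrite -leqNgt => h.
by rewrite prodlin_big.
Qed.

Lemma prodlin_val (I : Type) (f : I -> lser L) (s : seq I) :
  (forall i, lc (f i) 0 != 0) -> (0 <= w) ->
  let m := \sum_(i <- s) Num.min w (lv (f i)) in
  (forall j, ge (prodlin (map f s) j) (m - w * j%:Z)) /\ initp (map f s) m != 0.
Proof.
move=> hf hw; elim: s => [|i s [IHg IHn]] /=.
  rewrite big_nil; split.
    case=> [|j] z hz /=; last by rewrite lcoef_zero.
    rewrite lcoef_one; case: eqP => // e; rewrite e in hz; lia.
  apply/eqP => h; have := congr1 (fun p : {poly L} => p`_0) h.
  rewrite coef_initp /= lcoef_one coef0 mulr0 subr0 eqxx => /eqP; by rewrite oner_eq0.
set y := f i; set ys := map f s.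
set m := \sum_(j <- s) Num.min w (lv (f j)).
rewrite big_cons -/m; set u := Num.min w (lv y).
have huw : u <= w by rewrite ge_min lexx.
have huo : u <= lv y by rewrite ge_min lexx orbT.
split.
  move=> k z hz; rewrite lcoef_add lcoef_opp.
  have h0 : lcoef (lmul y (prodlin ys k)) z = 0.
    rewrite (ge_mul (@ge_lv _ y) (IHg k)) //; lia.
  rewrite h0 oppr0 addr0.
  clear h0; case: k hz => [|k] hz; first by rewrite lcoef_zero.
  rewrite IHg //; nia.
set c := lc y 0.
have hc : lcoef y (lv y) = c by rewrite /c -lcoef_lc addr0.
set a : L := (u == w)%:R.
set b : L := (u == lv y)%:R * c.
have -> : initp (y :: ys) (u + m) = (a *: 'X - b%:P) * initp ys m.
  apply/polyP => k; rewrite coef_initp mulrBl coefB -scalerAl coefZ coefXM coefCM.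
  rewrite coef_initp /= lcoef_add lcoef_opp; congr (_ - _).
    case: k => [|k] /=; first by rewrite lcoef_zero mulr0.
    rewrite /a; have [e|ne] := eqVneq u w.
      by rewrite mul1r; congr lcoef; rewrite e; lia.
    rewrite mul0r IHg //. 
    have : u < w by rewrite lt_neqAle ne huw. lia.
  rewrite coef_initp /b; have [e|ne] := eqVneq u (lv y).
    have -> : u + m - w * k%:Z = lv y + (m - w * k%:Z) by rewrite e; ring.
    by rewrite (lead_mul (@ge_lv _ y) (IHg k)) hc mul1r.
  rewrite (_ : (false%:R : L) = 0) // !mul0r (ge_mul (@ge_lv _ y) (IHg k)) //.
  have : u < lv y by rewrite lt_neqAle ne huo. lia.
rewrite mulf_neq0 //.
have [e|ne] := eqVneq u w.
  rewrite /a e eqxx scale1r; apply/eqP => h.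
  have := congr1 (fun p : {poly L} => p`_1) h.
  rewrite coefB coefX coefC /= subr0 coef0 => /eqP; by rewrite oner_eq0.
have eo : u = lv y.
  move: ne; rewrite /u /Num.min; case: ifP => //; by rewrite eqxx.
rewrite /a (negbTE ne) scale0r sub0r oppr_eq0 polyC_eq0 /b eo eqxx mul1r.
exact: hf.
Qed.
End Val.

Lemma mixed_coef (K : fieldType) (F : {poly {poly K}}) i j :
  mixed_deriv_at0 F i j = (F`_j)`_i *+ j`! *+ i`!.
Proof.
rewrite /mixed_deriv_at0 !horner_coef0.
rewrite coef_map_id0; last by rewrite derivn_poly0 // size_poly0.
rewrite coef_derivn addn0 ffactnn.
rewrite coef_derivn.
rewrite addn0 ffactnn coefMn.
by [].
Qed.

Lemma mixed_neq0 (K : fieldType) (F : {poly {poly K}}) i j :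
  [pchar K] =i pred0 -> (mixed_deriv_at0 F i j != 0) = ((F`_j)`_i != 0).
Proof.
move=> hc; rewrite mixed_coef -mulrnA.
have -> : F`_j`_i *+ (j`! * i`!) = F`_j`_i * (j`! * i`!)%:R by rewrite mulr_natr.
rewrite mulf_eq0 negb_or.
have /pcharf0P h := hc.
by rewrite h muln_eq0 negb_or -!lt0n !fact_gt0 !andbT.
Qed.
Section PL.
Variables (K : fieldType) (L : fieldExtType K).

Lemma lcoef_poly (E : nat) (q : {poly K}) z :
  lcoef (poly_lser L E q) z =
  if (0 <= z) && (E %| `|z|)%N then (q`_(`|z| %/ E))%:A else 0.
Proof.
rewrite /lcoef /= subr0; case: (0 <= z) => //.
Qed.

Lemma lcoef_polyE (E : nat) (q : {poly K}) (i : nat) : (0 < E)%N ->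
  lcoef (poly_lser L E q) (E * i)%N%:Z = (q`_i)%:A.
Proof.
move=> hE; rewrite lcoef_poly /= dvdn_mulr // mulKn //.
Qed.

Lemma alg_neq0 (x : K) : ((x%:A : L) != 0) = (x != 0).
Proof. by rewrite scaler_eq0 oner_eq0 orbF. Qed.


Lemma lcoef_poly_nz (E : nat) (q : {poly K}) z : (0 < E)%N ->
  lcoef (poly_lser L E q) z != 0 ->
  exists i, z = (E * i)%N%:Z /\ q`_i != 0.
Proof.
move=> hE; rewrite lcoef_poly; case: ifP; last by rewrite eqxx.
move=> /andP[hz hd]; rewrite alg_neq0 => hq; exists (`|z| %/ E)%N; split => //.
by rewrite mulnC divnK // gez0_abs.
Qed.
End PL.

Lemma term_eq (E d e : nat) (k : int) : E = (d * e)%N -> (0 < d)%N -> (0 < e)%N ->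
 ((Num.min (E%:Z) (k * d%:Z) - Num.min 0 (k * d%:Z))%:~R : rat) =
 (if 0 < k then Num.min 1 (k%:~R / e%:R) else 0) * E%:R.
Proof.
move=> hE hd he; case: ifP => hk.
  rewrite (@min_l _ _ 0) ?subr0; last by nia.
  have he' : (0 : rat) < e%:R by rewrite ltr0n.
  have [h|h] := leP (E%:Z) (k * d%:Z).
    rewrite min_l ?mul1r //.
    have -> : (e%:R : rat) = (e%:Z)%:~R by [].
    rewrite ler_pdivlMr; last by rewrite ltr0z; lia.
    rewrite mul1r ler_int; nia.
  have -> : (e%:R : rat) = (e%:Z)%:~R by [].
  rewrite min_r; last first.
    rewrite ltW // ltr_pdivrMr; last by rewrite ltr0z; lia.
    rewrite mul1r ltr_int; nia.
  have -> : (E%:R : rat) = (E%:Z)%:~R by [].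
  rewrite hE !PoszM !intrM; field.
  by rewrite gt_eqF.
rewrite mul0r min_r; last by nia.
rewrite min_r ?subrr //; nia.
Qed.

Lemma ar1 (x m : int) (j k : nat) : x + (m - 0 * j%:Z) = k%:Z -> x + m <= 0 -> x + m = 0.
Proof. lia. Qed.

Lemma ar2 (E i i2 j j2 : nat) (el m1 : int) :
  ~ ((E * i)%N%:Z < el + (m1 - E%:Z * j%:Z)) ->
  el + (m1 - E%:Z * j2%:Z) = (E * i2)%N%:Z -> (E * (i2 + j2) <= E * (i + j))%N.
Proof. nia. Qed.

Lemma ar3 (E i2 j2 : nat) (el m0 m1 : int) :
  el + m0 = 0 -> el + (m1 - E%:Z * j2%:Z) = (E * i2)%N%:Z ->
  (i2 + j2)%N%:Z * E%:Z = m1 - m0.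
Proof. nia. Qed.

End Helpers.
Import Helpers.

Theorem mainTheorem6 (K : fieldType) (L : fieldExtType K) (F : {poly {poly K}})
    (n : nat) (e : 'I_n -> nat) (kappa : 'I_n -> int) (a : 'I_n -> int -> L) :
  [pchar K] =i pred0 ->
  size F = n.+1 ->
  map_poly (fun p : {poly K} => p.[0]) F != 0 ->
  (forall i, (0 < e i)%N) ->
  (forall i, a i (kappa i) != 0) ->
  (forall i k, k < kappa i -> a i k = 0) ->
  (let E := (\prod_(i < n) e i)%N in
   forall j : nat,
     lser_eq (poly_lser L E F`_j)
       (lmul (poly_lser L E (lead_coef F))
             (prodlin [seq puiseux_lser E (e i) (kappa i) (a i) | i <- enum 'I_n] j))) ->
  exists r : nat, is_order_at0 F r /\
    r%:R = \sum_(i < n | 0 < kappa i) Num.min 1 ((kappa i)%:~R / (e i)%:R : rat).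
Proof.
move=> hchar hsize hF0 he ha hak /= hfact.
set E := (\prod_(i < n) e i)%N in hfact.
have hE : (0 < E)%N by apply: prodn_gt0.
have hdvd : forall i, (e i %| E)%N by move=> i; rewrite /E (bigD1 i) //= dvdn_mulr.
set f := fun i => puiseux_lser E (e i) (kappa i) (a i).
set P := prodlin [seq f i | i <- enum 'I_n].
have hf0 : forall i, lc (f i) 0 != 0.
  by move=> i; rewrite /f /= dvdn0 div0n addr0; exact: ha.
set p := lead_coef F.
have hp : p != 0 by rewrite lead_coef_eq0 -size_poly_eq0 hsize.
have [l hl hlmin] : exists2 l, p`_l != 0 & forall k, (k < l)%N -> p`_k = 0.
  have ex : exists k, p`_k != 0 by exists (size p).-1; rewrite -lead_coefE lead_coef_eq0.
  case: (ex_minnP ex) => l hl hm; exists l => // k hk; apply/eqP.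
  by apply: contraTT hk; rewrite -leqNgt; exact: hm.
set pl := poly_lser L E p.
have hgep : ge pl (E * l)%N%:Z.
  move=> z hz; rewrite lcoef_poly; case: ifP => // /andP[hz0 hdz].
  rewrite hlmin ?scale0r // ltn_divLR //; lia.
have hpl : lcoef pl (E * l)%N%:Z != 0 by rewrite lcoef_polyE // alg_neq0.
have key : forall w m, (forall j, ge (P j) (m - w * j%:Z)) -> forall j,
   ge (poly_lser L E F`_j) ((E * l)%N%:Z + (m - w * j%:Z)) /\
   lcoef (poly_lser L E F`_j) ((E * l)%N%:Z + (m - w * j%:Z)) =
     lcoef pl (E * l)%N%:Z * lcoef (P j) (m - w * j%:Z).
  move=> w m hg j; split.
    by move=> z hz; rewrite hfact (ge_mul hgep (hg j)).
  by rewrite hfact (lead_mul hgep (hg j)).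
have := @prodlin_val L 0 _ f (enum 'I_n) hf0 (lexx 0).
move=> /= [hg0 hn0].
set m0 := \sum_(i <- enum 'I_n) Num.min 0 (lv (f i)) in hg0 hn0.
have [j0 hj0] : exists j, lcoef (P j) (m0 - 0 * j%:Z) != 0.
  by exists (size (initp 0 [seq f i | i <- enum 'I_n] m0)).-1;
    rewrite -coef_initp -lead_coefE lead_coef_eq0.
have [hG0 hL0] := key 0 m0 hg0 j0.
have nz0 : lcoef (poly_lser L E F`_j0) ((E * l)%N%:Z + (m0 - 0 * j0%:Z)) != 0.
  by rewrite hL0 mulf_neq0.
have [i0 [hi0 _]] := lcoef_poly_nz hE nz0.
have [j1 hj1] : exists j, (F`_j)`_0 != 0.
  set G := map_poly _ F in hF0; exists (size G).-1.
  have : G`_(size G).-1 != 0 by rewrite -lead_coefE lead_coef_eq0.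
  by rewrite /G coef_map_id0 ?horner0 // horner_coef0.
have nz1 : lcoef (poly_lser L E F`_j1) 0 != 0.
  by have := lcoef_polyE L F`_j1 0 hE; rewrite muln0 => ->; rewrite alg_neq0.
have [hG1 _] := key 0 m0 hg0 j1.
have h00 : (E * l)%N%:Z + m0 <= 0.
  rewrite leNgt; apply/negP => h; move: nz1; rewrite hG1 ?eqxx //; lia.
have hm0 : (E * l)%N%:Z + m0 = 0 by exact: ar1 hi0 h00.
have hE0 : (0 : int) <= E%:Z by [].
have := @prodlin_val L E%:Z _ f (enum 'I_n) hf0 hE0.
move=> /= [hg1 hn1].
set m1 := \sum_(i <- enum 'I_n) Num.min E%:Z (lv (f i)) in hg1 hn1.
have [j2 hj2] : exists j, lcoef (P j) (m1 - E%:Z * j%:Z) != 0.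
  by exists (size (initp E%:Z [seq f i | i <- enum 'I_n] m1)).-1;
    rewrite -coef_initp -lead_coefE lead_coef_eq0.
have [hG2 hL2] := key E%:Z m1 hg1 j2.
have nz2 : lcoef (poly_lser L E F`_j2) ((E * l)%N%:Z + (m1 - E%:Z * j2%:Z)) != 0.
  by rewrite hL2 mulf_neq0.
have [i2 [hi2 hq2]] := lcoef_poly_nz hE nz2.
exists (i2 + j2)%N; split; first split.
- by exists i2, j2; split => //; rewrite mixed_neq0.
- move=> i j; rewrite mixed_neq0 // => hij.
  have nz : lcoef (poly_lser L E F`_j) (E * i)%N%:Z != 0 by rewrite lcoef_polyE // alg_neq0.
  have [hGj _] := key E%:Z m1 hg1 j.
  have hn : ~ ((E * i)%N%:Z < (E * l)%N%:Z + (m1 - E%:Z * j%:Z)).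
    by move=> h; move: nz; rewrite hGj // eqxx.
  have := ar2 hn hi2.
  by rewrite leq_pmul2l.
have hr : (i2 + j2)%N%:Z * E%:Z = m1 - m0 by exact: ar3 hm0 hi2.
have hEq : (E%:R : rat) != 0 by rewrite pnatr_eq0 -lt0n.
apply: (mulIf hEq).
have -> : ((i2 + j2)%N%:R * E%:R : rat) = (m1 - m0)%:~R by rewrite -hr intrM.
rewrite /m1 /m0 -sumrB mulr_suml rmorph_sum /= [RHS]big_mkcond big_enum /=.
apply: eq_big => // i _.
have hdi : (0 < E %/ e i)%N by rewrite divn_gt0 // dvdn_leq.
rewrite (@term_eq E (E %/ e i) (e i) (kappa i)) ?divnK //.
by case: ifP => _; rewrite ?mul0r.
Qed.
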